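(* Let $G=(V,E)$ be a connected graph with $n=|V|\ge 2$, edge weights $w$ and edge costs $c$. Let $F\subseteq E$ be such that $G\setminus F$ is connected, with cost $B=c(F)$ and profit $\Delta=p_G(F)$. Then there exist an integer $t\le n$ and partial cuts $C_1,\dots,C_{t-1}$ in $G$ (each of the form $C_G(S_i,W_i)$) such that $\sum_{i=1}^{t-1}c(C_i)\le 2B\log n$ and $\sum_{i=1}^{t-1}p_G(C_i)\ge\Delta$.
   Context: $G=(V,E)$ is a finite undirected graph (parallel edges allowed) with edge weights $w:E\to\mathbb{R}_{\ge0}$ and removal costs $c:E\to\mathbb{R}_{>0}$; $c(F)=\sum_{f\in F}c(f)$; $G\setminus F=(V,E\setminus F)$. $\mathrm{MST}(H)$ is the weight of a minimum spanning tree of $H$ w.r.t. $w$, with $\mathrm{MST}(H)=\infty$ if $H$ is disconnected. The profit is $p_G(F)=\mathrm{MST}(G\setminus F)-\mathrm{MST}(G)$. For $\emptyset\ne S\subsetneq V$, the complete cut is $C_G(S)=\{e\in E:|e\cap S|=1\}$ and, for $W\in\mathbb{R}$, the partial cut is $C_G(S,W)=\{e\in C_G(S):w(e)<W\}$. $\log$ denotes $\log_2$. *)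

(* Defs.v *)
From HB Require Import structures.
From mathcomp Require Import all_boot all_order all_algebra.
From mathcomp Require Import all_classical all_reals all_analysis.
Set Implicit Arguments. Unset Strict Implicit. Unset Printing Implicit Defensive.
Import Order.TTheory GRing.Theory Num.Theory.
Local Open Scope ring_scope.

(* A multigraph G = (V, E): E is a finite type of edge names, each edge e
   has two endpoints ends e = (u, v).  Parallel edges are allowed. *)
Section Graph.
Variables (R : realType) (V E : finType) (ends : E -> V * V) (w : E -> R).

Definition adj (A : {set E}) : rel V :=
  fun u v => [exists e in A, (ends e == (u, v)) || (ends e == (v, u))].

Definition connectedE (A : {set E}) : Prop := forall u v : V, connect (adj A) u v.

Definition spanning_tree (A T : {set E}) : bool :=
  [&& T \subset A, [forall u, forall v, connect (adj T) u v] & #|T| == #|V|.-1].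

(* MST weight of (V, A); +oo if there is no spanning tree (disconnected) *)
Definition MST (A : {set E}) : \bar R :=
  \big[Order.min/+oo%E]_(T : {set E} | spanning_tree A T) ((\sum_(e in T) w e)%:E).

Definition profit (F : {set E}) : \bar R := (MST (~: F) - MST [set: E])%E.

Definition cut (S : {set V}) : {set E} :=
  [set e | ((ends e).1 \in S) != ((ends e).2 \in S)].

Definition pcut (S : {set V}) (W : R) : {set E} := [set e in cut S | w e < W].

End Graph.

Definition cost (R : realType) (E : finType) (c : E -> R) (F : {set E}) : R :=
  \sum_(e in F) c e.

Definition log2 (R : realType) (x : R) : R := ln x / ln 2.

(* Main.v *)
Require Import Defs.
From HB Require Import structures.
From mathcomp Require Import all_boot all_order all_algebra zify ring lra.
Set Implicit Arguments. Unset Strict Implicit. Unset Printing Implicit Defensive.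
Import Order.TTheory GRing.Theory Num.Theory.
Module P1.


Section Comp.
Variables (V E : finType) (ends : E -> V * V).

Local Notation adj := (adj ends).
Local Notation cut := (cut ends).
Definition conn A u v := connect (adj A) u v.
Definition cc A u := [set v | conn A u v].
Definition comps A := [set cc A u | u : V].
Definition comp A := #|comps A|.

Lemma adj_sym (A : {set E}) : symmetric (adj A).
Proof.
move=> u v; apply/existsP/existsP => -[e /andP[eA H]]; exists e;
  by rewrite eA /= orbC.
Qed.

Lemma conn_sym (A : {set E}) u v : conn A u v = conn A v u.
Proof. exact: (sym_connect_sym (adj_sym A)). Qed.

Lemma conn_refl (A : {set E}) u : conn A u u.
Proof. exact: connect0. Qed.

Lemma conn_trans (A : {set E}) u v x : conn A u v -> conn A v x -> conn A u x.
Proof. exact: connect_trans. Qed.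

Lemma conn_eqr (A : {set E}) x y z : conn A x y -> conn A z x = conn A z y.
Proof.
move=> H; apply/idP/idP => H2; first exact: conn_trans H2 H.
by apply: conn_trans H2 _; rewrite conn_sym.
Qed.

Lemma conn_eql (A : {set E}) x y z : conn A x y -> conn A x z = conn A y z.
Proof. by move=> H; rewrite conn_sym (conn_eqr _ H) conn_sym. Qed.

Lemma adj_edge (A : {set E}) e : e \in A -> adj A (ends e).1 (ends e).2.
Proof. by move=> eA; apply/existsP; exists e; rewrite eA -surjective_pairing eqxx. Qed.

Lemma conn_edge (A : {set E}) e : e \in A -> conn A (ends e).1 (ends e).2.
Proof. by move=> eA; apply: connect1; apply: adj_edge. Qed.

Lemma adj_inv (A : {set E}) u v : adj A u v ->
  exists2 e, e \in A & (ends e = (u, v) \/ ends e = (v, u)).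
Proof.
by case/existsP => e /andP[eA /orP[/eqP H|/eqP H]]; exists e => //; [left|right].
Qed.

Lemma conn_closure (A B : {set E}) :
  (forall e, e \in B -> conn A (ends e).1 (ends e).2) ->
  forall u v, conn B u v -> conn A u v.
Proof.
move=> H u v; apply: connect_sub => x y /adj_inv [e eB [He|He]];
  have := H e eB; rewrite He //= conn_sym //.
Qed.

Lemma conn_mono (A B : {set E}) u v : A \subset B -> conn A u v -> conn B u v.
Proof.
move=> AB; apply: conn_closure => e eA; apply: conn_edge; exact: (subsetP AB).
Qed.

Lemma mem_cc (A : {set E}) u v : (v \in cc A u) = conn A u v.
Proof. by rewrite inE. Qed.

Lemma cc_eqP (A : {set E}) u v : reflect (cc A u = cc A v) (conn A u v).
Proof.
apply: (iffP idP) => [H|H].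
  by apply/setP => x; rewrite !inE (conn_eql _ H).
by have := conn_refl A v; rewrite -mem_cc -H mem_cc.
Qed.

Lemma cc_in (A : {set E}) u : u \in cc A u.
Proof. by rewrite mem_cc conn_refl. Qed.

Lemma cc_comps (A : {set E}) u : cc A u \in comps A.
Proof. by apply/imsetP; exists u. Qed.

Lemma conn_L3 (A : {set E}) e u v :
  conn (e |: A) u v -> conn A u v ||
   ((conn A u (ends e).1 || conn A u (ends e).2) &&
    (conn A v (ends e).1 || conn A v (ends e).2)).
Proof.
set a := (ends e).1; set b := (ends e).2.
set P := [pred x | conn A u x || ((conn A u a || conn A u b) &&
                                   (conn A x a || conn A x b))].
have cl : closed (adj (e |: A)) P.
  move=> x y /adj_inv [f]; rewrite in_setU1 /P !inE => /orP[/eqP->|fA] H.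
    case: H => H.
      have ->: a = x by rewrite /a H.
      have ->: b = y by rewrite /b H.
      rewrite !conn_refl !orbT !andbT.
      by case: (conn A u x); case: (conn A u y).
    have ->: a = y by rewrite /a H.
    have ->: b = x by rewrite /b H.
    rewrite !conn_refl !orbT !andbT.
    by case: (conn A u x); case: (conn A u y).
  have Hxy : conn A x y.
    by case: H => H; have := conn_edge fA; rewrite H //= conn_sym.
  by rewrite (conn_eqr _ Hxy) (conn_eql _ Hxy) (conn_eql _ Hxy) //=.
move=> H; have := closed_connect cl H.
by rewrite !inE conn_refl /= => <-.
Qed.

Lemma comp_part (A' A : {set E}) : A' \subset A ->
  comp A' = \sum_(K in comps A) #|[set cc A' u | u in K]|.
Proof.
move=> sub.
pose f (Y : {set V}) := [set v | [exists u in Y, conn A u v]].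
have fcc u : f (cc A' u) = cc A u.
  apply/setP => v; rewrite !inE; apply/existsP/idP => [[x /andP[]]|H].
    by rewrite mem_cc => H1 H2; apply: conn_trans H2; apply: conn_mono H1.
  by exists u; rewrite cc_in.
rewrite /comp -sum1_card (partition_big f (mem (comps A))); last first.
  move=> Y /imsetP[u _ ->]; rewrite fcc; exact: cc_comps.
apply: eq_bigr => K /imsetP[k _ ->].
rewrite -sum1_card; apply: eq_bigl => Y /=.
apply/andP/imsetP => [[/imsetP[u _ ->] /eqP]|[u]].
  rewrite fcc => /cc_eqP H; exists u => //; by rewrite mem_cc conn_sym.
rewrite mem_cc => H ->; split; first exact: cc_comps.
by rewrite fcc; apply/eqP/cc_eqP; rewrite conn_sym.
Qed.


Lemma cc_same (A B : {set E}) : A \subset B ->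
  (forall e, e \in B -> conn A (ends e).1 (ends e).2) -> cc A =1 cc B.
Proof.
move=> sub H u; apply/setP => v; rewrite !inE; apply/idP/idP.
  exact: conn_mono.
exact: conn_closure.
Qed.

Lemma comps_same (A B : {set E}) : A \subset B ->
  (forall e, e \in B -> conn A (ends e).1 (ends e).2) -> comps A = comps B.
Proof. by move=> sub H; apply: eq_imset; apply: cc_same. Qed.

Lemma comp_merge (A : {set E}) e : ~~ conn A (ends e).1 (ends e).2 ->
  comp A = (comp (e |: A)).+1.
Proof.
move=> nab; set a := (ends e).1 in nab *; set b := (ends e).2 in nab *.
have sub : A \subset e |: A by apply/subsetP => x xA; rewrite in_setU1 xA orbT.
have eab : conn (e |: A) a b by apply: conn_edge; rewrite in_setU1 eqxx.
rewrite (comp_part sub) (bigD1 (cc (e |: A) a)) ?cc_comps //=.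
have -> : [set cc A u | u in cc (e |: A) a] = [set cc A a; cc A b].
  apply/setP => Y; apply/imsetP/set2P => [[u]|[->|->]].
    rewrite mem_cc => /conn_L3; rewrite conn_refl /= -/a -/b.
    case/orP => [H ->|/orP[H|H] ->].
    - by left; apply/cc_eqP; rewrite conn_sym.
    - by left; apply/cc_eqP.
    - by right; apply/cc_eqP.
  - by exists a; rewrite ?cc_in.
  - by exists b; rewrite ?mem_cc.
rewrite cards2.
have -> : (cc A a != cc A b) by apply/negP => /eqP/cc_eqP; apply/negP.
rewrite (eq_bigr (fun _ => 1)); last first.
  move=> K /andP[/imsetP[u _ ->]] neq.
  have nua : ~~ conn (e |: A) u a.
    by apply: contra neq => H; apply/eqP/cc_eqP.
  apply/eqP/cards1P; exists (cc A u); apply/setP => Y.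
  apply/imsetP/set1P => [[x]|->]; last by exists u; rewrite ?cc_in.
  rewrite mem_cc => /conn_L3 /orP[H ->|/andP[/orP[H|H] _]].
  - by apply/cc_eqP; rewrite conn_sym.
  - by case/negP: nua; apply: conn_mono H.
  - case/negP: nua; apply: conn_trans (conn_mono sub H) _.
    by rewrite conn_sym.
rewrite sum1_card.
have := cardsD1 (cc (e |: A) a) (comps (e |: A)); rewrite cc_comps add1n.
rewrite /comp => ->.
rewrite add2n; congr (_.+2); apply: eq_card => K; rewrite !inE andbC.
by [].
Qed.

Lemma sub_setU1 (A : {set E}) e : A \subset e |: A.
Proof. by apply/subsetP => x xA; rewrite in_setU1 xA orbT. Qed.

Lemma comps_add_conn (A : {set E}) e : conn A (ends e).1 (ends e).2 ->
  comps (e |: A) = comps A.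
Proof.
move=> H; symmetry; apply: comps_same; first exact: sub_setU1.
move=> f; rewrite in_setU1 => /orP[/eqP->//|fA]; exact: conn_edge.
Qed.

Lemma comp_add (A : {set E}) e :
  (comp (e |: A) <= comp A) && (comp A <= (comp (e |: A)).+1).
Proof.
case: (boolP (conn A (ends e).1 (ends e).2)) => H.
  by rewrite /comp comps_add_conn // leqnn leqnSn.
by rewrite (comp_merge H) leqnSn leqnn.
Qed.

Lemma comp_mono (A B : {set E}) : A \subset B -> comp B <= comp A.
Proof.
move=> sub; rewrite (comp_part sub) {1}/comp -sum1_card; apply: leq_sum => K /imsetP[u _ ->].
by rewrite card_gt0; apply/set0Pn; exists (cc A u); apply/imsetP; exists u; rewrite ?cc_in.
Qed.

Lemma comp_del (A B : {set E}) : A \subset B -> comp A <= comp B + #|B :\: A|.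
Proof.
move: {2}#|B :\: A| (erefl #|B :\: A|) => k; elim: k A => [|k IH] A Hk sub.
  have -> : A = B.
    apply/eqP; rewrite eqEsubset sub /=; apply/subsetP => x xB.
    apply/negPn/negP => xA.
    by move/eqP: Hk; rewrite cards_eq0 => /eqP/setP/(_ x); rewrite !inE xA xB.
  by rewrite leq_addr.
have : 0 < #|B :\: A| by rewrite Hk.
rewrite card_gt0 => /set0Pn[e]; rewrite inE => /andP[eA eB].
have sub' : e |: A \subset B by rewrite subUset sub sub1set eB.
have Hk' : #|B :\: (e |: A)| = k.
  have : #|B :\: A| = (e \in B :\: A) + #|(B :\: A) :\ e| by apply: cardsD1.
  rewrite Hk inE eA eB add1n => -[->]; apply: eq_card => x.
  by rewrite !inE negb_or; case: (x == e); case: (x \in A).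
have := IH _ Hk' sub'; have /andP[_ h] := comp_add A e.
move=> h2; apply: leq_trans h _; rewrite Hk addnS ltnS -Hk'; exact: h2.
Qed.

Lemma comp_conn1 (A : {set E}) : comp A = 1 -> forall u v, conn A u v.
Proof.
move=> /eqP/cards1P[K HK] u v; apply/cc_eqP.
by have := cc_comps A u; have := cc_comps A v; rewrite HK !inE => /eqP-> /eqP->.
Qed.

Lemma conn_comp1 (A : {set E}) (u0 : V) : (forall u v, conn A u v) -> comp A = 1.
Proof.
move=> H; apply/eqP/cards1P; exists (cc A u0); apply/setP => K.
apply/imsetP/set1P => [[u _ ->]|->]; last by exists u0.
by apply/cc_eqP; rewrite conn_sym.
Qed.

Lemma comp_gt0 (A : {set E}) (u : V) : 0 < comp A.
Proof. by rewrite card_gt0; apply/set0Pn; exists (cc A u); apply: cc_comps. Qed.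

Lemma comp_lt_edge (A B : {set E}) : A \subset B -> comp B < comp A ->
  exists2 e, e \in B & ~~ conn A (ends e).1 (ends e).2.
Proof.
move=> sub lt; apply/exists_inP; apply: contraLR lt => /exists_inPn H.
rewrite -leqNgt /comp (comps_same sub) //.
by move=> e /H; rewrite negbK.
Qed.


Definition splits (K S : {set V}) := (K :&: S != set0) && (K :\: S != set0).

Lemma conn_cut (A : {set E}) S x y : conn (A :\: cut S) x y -> (x \in S) = (y \in S).
Proof.
apply: closed_connect => p q /adj_inv [f]; rewrite !inE => /andP[nc _] [] H;
  move: nc; rewrite H /= negbK => /eqP //.
Qed.

Lemma comp_cut (A : {set E}) S :
  comp A + #|[set K in comps A | splits K S]| <= comp (A :\: cut S).
Proof.
have sub : A :\: cut S \subset A by apply: subsetDl.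
have -> : #|[set K in comps A | splits K S]| = \sum_(K in comps A) (splits K S : nat).
  rewrite -sum1_card big_mkcond /= [RHS]big_mkcond /=; apply: eq_bigr => K _.
  by rewrite inE; case: (K \in comps A); case: splits.
rewrite (comp_part sub) /comp -sum1_card -big_split /=.
apply: leq_sum => K /imsetP[u _ ->].
case: (boolP (splits (cc A u) S)) => [/andP[/set0Pn[x] /setIP[xK xS] /set0Pn[y] /setDP[yK yS]]|_].
  rewrite add1n; apply: (@leq_trans #|[set cc (A :\: cut S) x; cc (A :\: cut S) y]|).
    rewrite cards2; case: eqP => //= /cc_eqP /conn_cut; rewrite xS.
    by move=> h; move: yS; rewrite -h.
  apply: subset_leq_card; apply/subsetP => Y /set2P[->|->]; apply/imsetP.
    by exists x.
  by exists y.
by rewrite addn0 card_gt0; apply/set0Pn; exists (cc (A :\: cut S) u); apply/imsetP; exists u; rewrite ?cc_in.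
Qed.

End Comp.

End P1.
Import P1.

Module P2.


Section Kr.
Variables (V E : finType) (ends : E -> V * V) (R : realDomainType) (w : E -> R) (e0 : E).
Local Notation conn := (conn ends).
Local Notation comp := (comp ends).
Local Notation cc := (cc ends).
Local Notation comps := (comps ends).

Definition pre (es : seq E) j := [set x in take j es].

Lemma pre_step es j : (j < size es)%N -> pre es j.+1 = nth e0 es j |: pre es j.
Proof.
move=> lt; apply/setP => x; rewrite /pre (take_nth e0 lt) !inE mem_rcons in_cons.
by [].
Qed.

Lemma pre_sub es i j : (i <= j)%N -> pre es i \subset pre es j.
Proof.
move=> ij; apply/subsetP => x; rewrite !inE => xi.
have xes := mem_take xi.
rewrite (in_take _ xes); rewrite (in_take _ xes) in xi.
exact: leq_trans xi ij.
Qed.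

Lemma pre_size es : pre es (size es) = [set x in es].
Proof. by rewrite /pre take_size. Qed.

Lemma pre0 es : pre es 0 = set0.
Proof. by apply/setP => x; rewrite !inE take0. Qed.

Lemma conn_set0 u v : conn set0 u v -> u = v.
Proof.
move=> H; have cl : closed (adj ends set0) (pred1 u).
  by move=> x y /adj_inv [f]; rewrite inE.
by have := closed_connect cl H; rewrite !inE eqxx => /esym/eqP.
Qed.

Lemma comp_set0 : comp set0 = #|V|.
Proof.
rewrite /P1.comp; have -> : comps set0 = [set [set u] | u : V].
  apply: eq_imset => u; apply/setP => v; rewrite !inE.
  apply/idP/eqP => [/conn_set0 -> //|->]; exact: conn_refl.
by rewrite card_imset //; apply: set1_inj.
Qed.

Definition Inv (H : {set E}) (es : seq E) :=
  [/\ {subset es <= H},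
      (forall i, (i < size es)%N ->
         ~~ conn (pre es i) (ends (nth e0 es i)).1 (ends (nth e0 es i)).2) &
      (forall i, (i < size es)%N -> forall e, e \in H -> (w e < w (nth e0 es i))%R ->
         conn (pre es i) (ends e).1 (ends e).2)].

Lemma Inv_forest H es j : Inv H es -> (j <= size es)%N -> comp (pre es j) + j = #|V|.
Proof.
case=> _ P2 _; elim: j => [|j IH] lt; first by rewrite pre0 comp_set0 addn0.
rewrite (pre_step lt) addnS -(IH (ltnW lt)) (comp_merge (P2 _ lt)).
by rewrite addSn.
Qed.

Lemma Inv_uniq H es : Inv H es -> uniq es.
Proof.
case=> _ P2 _.
suff : forall j, (j <= size es)%N -> uniq (take j es).
  by move/(_ (size es) (leqnn _)); rewrite take_size.
elim=> [|j IH] lt; first by rewrite take0.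
rewrite (take_nth e0 lt) rcons_uniq IH ?(ltnW lt) // andbT.
apply/negP => xin; have := P2 _ lt; rewrite (conn_edge ends (A := pre es j)) //.
by rewrite inE.
Qed.

Lemma Inv_mono H es i j : Inv H es -> (i <= j)%N -> (j < size es)%N ->
  (w (nth e0 es i) <= w (nth e0 es j))%R.
Proof.
move=> [Q1 Q2 Q3] ij jlt; rewrite leNgt; apply/negP => lt.
have ilt : (i < size es)%N by apply: leq_ltn_trans ij jlt.
have := Q3 _ ilt (nth e0 es j) (Q1 _ (mem_nth e0 jlt)) lt.
move=> /(conn_mono (pre_sub es ij)); apply/negP; exact: Q2.
Qed.


Lemma pre_rcons es x i : (i <= size es)%N -> pre (rcons es x) i = pre es i.
Proof. by move=> lt; rewrite /pre -cats1 takel_cat. Qed.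

Lemma set_rcons (es : seq E) x : [set y in rcons es x] = x |: [set y in es].
Proof. by apply/setP => y; rewrite !inE mem_rcons in_cons. Qed.

Lemma kruskal (H : {set E}) : exists es, Inv H es /\ comp [set x in es] = comp H.
Proof.
suff: forall m (es : seq E), Inv H es -> comp [set x in es] - comp H = m ->
    exists es', Inv H es' /\ comp [set x in es'] = comp H.
  move/(_ _ [::]); apply=> //; split => //.
have subH es : Inv H es -> [set x in es] \subset H.
  by case=> Q1 _ _; apply/subsetP => x; rewrite inE => /Q1.
elim=> [|m IH] es inv hm.
  exists es; split => //; apply/eqP.
  by rewrite eqn_leq (@comp_mono _ _ ends _ _ (subH _ inv)) andbT -subn_eq0 hm.
have lt : (comp H < comp [set x in es])%N by rewrite -subn_gt0 hm.
have [e1 e1H ne1] := comp_lt_edge (subH _ inv) lt.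
pose P e := (e \in H) && ~~ conn [set x in es] (ends e).1 (ends e).2.
have Pe1 : P e1 by rewrite /P e1H.
case: (Order.TotalTheory.arg_minP (fun e => w e) Pe1) => es_ /andP[esH nes] minp.
have [Q1 Q2 Q3] := inv.
have inv' : Inv H (rcons es es_).
  split.
  - by move=> x; rewrite mem_rcons in_cons => /orP[/eqP->//|]; apply: Q1.
  - move=> i; rewrite size_rcons ltnS leq_eqVlt => /orP[/eqP->|ilt].
      by rewrite pre_rcons // pre_size nth_rcons ltnn eqxx.
    by rewrite pre_rcons ?(ltnW ilt) // nth_rcons ilt; apply: Q2.
  - move=> i; rewrite size_rcons ltnS leq_eqVlt => /orP[/eqP->|ilt] e eH.
      rewrite pre_rcons // pre_size nth_rcons ltnn eqxx => lte.
      apply/negPn/negP => ne; have := minp e; rewrite /P eH ne => /(_ isT).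
      by rewrite leNgt lte.
    by rewrite pre_rcons ?(ltnW ilt) // nth_rcons ilt; apply: Q3.
apply: (IH (rcons es es_) inv').
move: hm; rewrite set_rcons (comp_merge nes) subSn //.
  by move=> [].
by rewrite -ltnS -(comp_merge nes).
Qed.


Definition ltw (A : {set E}) (x : R) := [set e in A | (w e < x)%R].
Definition k0 (es : seq E) (x : R) := find (fun e => ~~ (w e < x)%R) es.

Lemma thr_lt H es x i : Inv H es -> (i < size es)%N ->
  (w (nth e0 es i) < x)%R = (i < k0 es x)%N.
Proof.
move=> inv lt; case: (ltnP i (k0 es x)) => ik.
  by have := before_find e0 ik; rewrite /= => /negbFE.
have k0lt : (k0 es x < size es)%N by apply: leq_ltn_trans ik lt.
have := nth_find e0 (a := fun e => ~~ (w e < x)%R) (s := es); rewrite has_find => /(_ k0lt) /=.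
rewrite -leNgt => h; apply/negbTE; rewrite -leNgt.
apply: le_trans h _; exact: Inv_mono inv ik lt.
Qed.

Lemma k0_size es x : (k0 es x <= size es)%N.
Proof. exact: find_size. Qed.

Lemma thr_pre_sub H es x : Inv H es -> pre es (k0 es x) \subset ltw H x.
Proof.
move=> inv; apply/subsetP => y; rewrite !inE => yin.
have yes := mem_take yin; rewrite (in_take _ yes) in yin.
have [Q1 _ _] := inv; rewrite Q1 //=.
by rewrite -(nth_index e0 yes) (thr_lt _ inv) ?index_mem.
Qed.

Lemma thr_comp H es x : Inv H es -> comp [set y in es] = comp H ->
  comp (pre es (k0 es x)) = comp (ltw H x).
Proof.
move=> inv hc; have [Q1 Q2 Q3] := inv.
case: (ltnP (k0 es x) (size es)) => klt.
  rewrite /P1.comp (comps_same (thr_pre_sub _ inv)) // => e; rewrite inE => /andP[eH lte].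
  apply: Q3 => //; apply: lt_le_trans lte _.
  have := nth_find e0 (a := fun e => ~~ (w e < x)%R) (s := es); rewrite has_find => /(_ klt) /=.
  by rewrite -leNgt.
have ek : k0 es x = size es by apply/eqP; rewrite eqn_leq k0_size.
apply/eqP; rewrite eqn_leq (@comp_mono _ _ ends _ _ (thr_pre_sub _ inv)) andbT.
rewrite ek pre_size hc.
by apply: comp_mono; apply/subsetP => y; rewrite inE => /andP[].
Qed.

Lemma thr_set H es x : Inv H es -> ltw [set y in es] x = pre es (k0 es x).
Proof.
move=> inv; apply/setP => y; rewrite !inE.
case: (boolP (y \in es)) => yes /=; last by apply/esym/negP => /mem_take; apply/negP.
by rewrite (in_take _ yes) -(thr_lt _ inv) ?index_mem // nth_index.
Qed.

Lemma card_pre H es j : Inv H es -> (j <= size es)%N -> #|pre es j| = j.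
Proof.
move=> inv lt; rewrite cardsE; move/card_uniqP: (take_uniq j (Inv_uniq inv)) => ->.
exact: size_takel.
Qed.

End Kr.

End P2.
Import P2.

Module P3.


Section Hier.
Variables (V E : finType) (ends : E -> V * V) (R : realDomainType) (w : E -> R) (e0 : E).
Local Notation conn := (conn ends).
Local Notation comp := (comp ends).
Local Notation cc := (cc ends).
Local Notation comps := (comps ends).

Definition Lset (es : seq E) j : {set V} :=
  let P := pre es j in let e := nth e0 es j in
  if (#|cc P (ends e).1| <= #|cc P (ends e).2|)%N then cc P (ends e).1 else cc P (ends e).2.

Lemma Lset_cases es j :
  Lset es j = cc (pre es j) (ends (nth e0 es j)).1 \/
  Lset es j = cc (pre es j) (ends (nth e0 es j)).2.
Proof. by rewrite /Lset; case: ifP; [left|right]. Qed.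

Lemma cc_g (P P' : {set E}) u : P \subset P' ->
  [set v | [exists y in cc P u, conn P' y v]] = cc P' u.
Proof.
move=> sub; apply/setP => v; rewrite !inE; apply/existsP/idP => [[x /andP[]]|H].
  by rewrite mem_cc => H1 H2; apply: conn_trans H2; apply: conn_mono H1.
by exists u; rewrite cc_in.
Qed.

Lemma card_step (P : {set E}) e (K : {set V}) c :
  c = (ends e).1 \/ c = (ends e).2 ->
  (#|[set cc P u | u in K] :\ cc P c| <= #|[set cc (e |: P) u | u in K]|)%N.
Proof.
move=> hc; set P' := e |: P.
have sub : P \subset P' by apply: sub_setU1.
pose g (Y : {set V}) := [set v | [exists y in Y, conn P' y v]].
set X := [set cc P u | u in K] :\ cc P c.
have -> : #|X| = #|g @: X|.
  apply/esym/card_in_imset => Y1 Y2.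
  rewrite !inE => /andP[n1 /imsetP[u uK E1]] /andP[n2 /imsetP[v vK E2]]; subst Y1 Y2.
  rewrite /g !cc_g // => /cc_eqP /conn_L3 /orP[H|/andP[H1 H2]]; first by apply/cc_eqP.
  have nu : ~~ conn P u c by apply: contra n1 => h; apply/eqP/cc_eqP.
  have nv : ~~ conn P v c by apply: contra n2 => h; apply/eqP/cc_eqP.
  apply/cc_eqP; case: hc => hc; rewrite hc in nu nv.
  - rewrite (negbTE nu) in H1; rewrite (negbTE nv) in H2.
    by apply: conn_trans H1 _; rewrite conn_sym.
  - rewrite (negbTE nu) orbF in H1; rewrite (negbTE nv) orbF in H2.
    by apply: conn_trans H1 _; rewrite conn_sym.
apply: subset_leq_card; apply/subsetP => Y /imsetP[Z]; rewrite !inE => /andP[_ /imsetP[u uK ->]] ->.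
by apply/imsetP; exists u => //; rewrite /g /= cc_g.
Qed.

Lemma meets_cc (P : {set E}) (K : {set V}) c :
  (cc P c \in [set cc P u | u in K]) = (K :&: cc P c != set0).
Proof.
apply/imsetP/set0Pn => [[u uK /cc_eqP H]|[u /setIP[uK uc]]].
  by exists u; rewrite inE uK mem_cc.
by exists u => //; apply/cc_eqP; rewrite -mem_cc.
Qed.

Lemma pot_step H es j (K : {set V}) : Inv ends w e0 H es -> (j < size es)%N ->
  (#|[set cc (pre es j) u | u in K]| <=
   #|[set cc (pre es j.+1) u | u in K]| + splits K (Lset es j))%N.
Proof.
move=> [_ Q2 _] lt; have nab := Q2 j lt.
have hL := Lset_cases es j.
move: nab hL; rewrite (pre_step e0 lt).
set P := pre es j; set e := nth e0 es j; set L := Lset es j.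
set a := (ends e).1; set b := (ends e).2 => nab hL.
set X := [set cc P u | u in K].
case: (boolP (cc P b \in X)) => mb; last first.
  rewrite (cardsD1 (cc P b) X) (negbTE mb) add0n.
  by apply: leq_trans (card_step _ _ (or_intror erefl)) (leq_addr _ _).
case: (boolP (cc P a \in X)) => ma; last first.
  rewrite (cardsD1 (cc P a) X) (negbTE ma) add0n.
  by apply: leq_trans (card_step _ _ (or_introl erefl)) (leq_addr _ _).
have -> : splits K L.
  rewrite /X !meets_cc in ma mb.
  have [u /setIP[uK ua]] := set0Pn _ ma; have [v /setIP[vK vb]] := set0Pn _ mb.
  rewrite /splits; case: hL => ->; apply/andP; split.
  - by apply/set0Pn; exists u; rewrite inE uK.
  - apply/set0Pn; exists v; rewrite inE vK andbT; apply/negP => va.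
    case/negP: nab; move: va vb; rewrite ?inE => va vb; apply: conn_trans va _; by rewrite conn_sym.
  - by apply/set0Pn; exists v; rewrite inE vK.
  - apply/set0Pn; exists u; rewrite inE uK andbT; apply/negP => ub.
    case/negP: nab; move: ua ub; rewrite ?inE => ua ub; apply: conn_trans ua _; by rewrite conn_sym.
rewrite (cardsD1 (cc P a) X) ma addnC leq_add2r.
exact: (card_step _ _ (or_introl erefl)).
Qed.


Lemma Lset_prop H es j : Inv ends w e0 H es -> (j < size es)%N ->
  Lset es j != set0 /\ Lset es j != setT.
Proof.
move=> [_ Q2 _] lt; have nab := Q2 j lt.
case: (Lset_cases es j) => ->; split.
- by apply/set0Pn; exists (ends (nth e0 es j)).1; apply: cc_in.
- apply/negP => /eqP/setP/(_ (ends (nth e0 es j)).2); rewrite !inE => h.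
  by move: nab; rewrite h.
- by apply/set0Pn; exists (ends (nth e0 es j)).2; apply: cc_in.
- apply/negP => /eqP/setP/(_ (ends (nth e0 es j)).1); rewrite !inE => h.
  by move: nab; rewrite conn_sym h.
Qed.

Lemma double H es j v : Inv ends w e0 H es -> (j <= size es)%N ->
  (2 ^ (\sum_(k < j) (v \in Lset es k)) <= #|cc (pre es j) v|)%N.
Proof.
move=> inv; have [_ Q2 _] := inv; elim: j => [|j IH] lt.
  by rewrite big_ord0 expn0 card_gt0; apply/set0Pn; exists v; apply: cc_in.
have lt' : (j < size es)%N by [].
have sub : pre es j \subset pre es j.+1 by apply: pre_sub.
rewrite big_ord_recr /=.
case: (boolP (v \in Lset es j)) => vL /=; last first.
  rewrite addn0; apply: leq_trans (IH (ltnW lt)) _; apply: subset_leq_card.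
  by apply/subsetP => x; rewrite !mem_cc; apply: conn_mono.
rewrite addn1 expnS mul2n -addnn.
have nab := Q2 j lt'; move: nab vL; rewrite (pre_step e0 lt').
have hL := Lset_cases es j; move: hL.
set P := pre es j; set e := nth e0 es j; rewrite /Lset -/P -/e.
set a := (ends e).1; set b := (ends e).2 => hL nab vL.
have eab : conn (e |: P) a b by apply: conn_edge; rewrite in_setU1 eqxx.
have hv : cc P v = (if (#|cc P a| <= #|cc P b|)%N then cc P a else cc P b).
  by case: ifP vL => _; rewrite mem_cc => h; apply/esym/cc_eqP.
have disj : cc P a :&: cc P b = set0.
  apply/setP => x; rewrite !inE; apply/negP => /andP[h1 h2]; case/negP: nab.
  by apply: conn_trans h1 _; rewrite conn_sym.
have sub' : P \subset e |: P by apply: sub_setU1.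
have hva : conn (e |: P) v a.
  case: hL => hL; rewrite hL in vL; rewrite mem_cc in vL.
    by rewrite conn_sym; apply: conn_mono sub' vL.
  apply: conn_trans (conn_mono sub' _) _; first by rewrite conn_sym; exact: vL.
  by rewrite conn_sym.
have h1 : (#|cc P a| + #|cc P b| <= #|cc (e |: P) v|)%N.
  rewrite -cardsUI disj cards0 addn0; apply: subset_leq_card.
  apply/subsetP => x; rewrite !inE => /orP[] h.
    by apply: conn_trans hva _; apply: conn_mono sub' h.
  by apply: conn_trans (conn_trans hva eab) _; apply: conn_mono sub' h.
have h2 : (#|cc P v| + #|cc P v| <= #|cc P a| + #|cc P b|)%N.
  rewrite hv; case: ifP => h; first by rewrite leq_add2l.
  by rewrite leq_add2r ltnW // ltnNge h.
have h3 := IH (ltnW lt).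
apply: leq_trans _ h1; apply: leq_trans _ h2; exact: (leq_add h3 h3).
Qed.

End Hier.

End P3.
Import P3.

Module P4.


Lemma telescope_le (f g : nat -> nat) a b : (a <= b)%N ->
  (forall i, (a <= i)%N -> (i < b)%N -> (f i <= f i.+1 + g i)%N) ->
  (f a <= f b + \sum_(a <= i < b) g i)%N.
Proof.
elim: b => [|b IH]; first by rewrite leqn0 => /eqP->; rewrite big_geq // addn0.
rewrite leq_eqVlt => /orP[/eqP->|ab]; first by rewrite big_geq // addn0.
move=> H; rewrite big_nat_recr //=.
have h1 := IH ab (fun i hi hb => H i hi (leqW hb)).
have h2 := H b ab (leqnn _).
lia.
Qed.

Section Thr.
Variables (V E : finType) (ends : E -> V * V) (R : realDomainType) (w : E -> R) (e0 : E).
Local Notation conn := (conn ends).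
Local Notation comp := (comp ends).
Local Notation cc := (cc ends).
Local Notation comps := (comps ends).
Local Notation cut := (cut ends).
Local Notation Lset := (Lset ends e0).
Local Notation Inv := (Inv ends w e0).
Local Notation ltw := (ltw w).

Definition Cset (es : seq E) j :=
  [set e in cut (Lset es j) | (w e < w (nth e0 es j))%R].

Lemma comps_full (A : {set E}) : (forall u v, conn A u v) ->
  forall u, cc A u = setT.
Proof. by move=> h u; apply/setP => v; rewrite !inE h. Qed.

Lemma thr_main H es x : Inv H es -> comp [set y in es] = comp H -> comp H = 1 ->
  (comp (ltw H x) + size es * comp (ltw setT x) <=
   comp (ltw setT x) + \sum_(j < size es) comp (ltw (~: Cset es j) x))%N.
Proof.
move=> inv hc h1.
set A := ltw setT x; set k := k0 w es x.
have sub0 : pre es k \subset A.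
  apply: subset_trans (thr_pre_sub _ inv) _.
  by apply/subsetP => e; rewrite !inE => /andP[_ ->].
pose M j := \sum_(K in comps A) #|[set cc (pre es j) u | u in K]|.
have Mk : M k = comp (ltw H x) by rewrite /M -comp_part // (thr_comp x inv hc).
have Ms : M (size es) = comp A.
  rewrite /M pre_size /P1.comp -sum1_card; apply: eq_bigr => K /imsetP[u _ ->].
  have full := comp_conn1 (etrans hc h1).
  apply/eqP/cards1P; exists setT; apply/setP => Y; apply/imsetP/set1P => [[v _ ->]|->].
    by apply: comps_full full v.
  by exists u; rewrite ?cc_in // (comps_full full).
have step : forall j, (k <= j)%N -> (j < size es)%N ->
    (M j <= M j.+1 + #|[set K in comps A | splits K (Lset es j)]|)%N.
  move=> j _ lt.
  have -> : #|[set K in comps A | splits K (Lset es j)]| =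
      \sum_(K in comps A) (splits K (Lset es j) : nat).
    rewrite -sum1_card big_mkcond /= [RHS]big_mkcond /=; apply: eq_bigr => K _.
    by rewrite inE; case: (K \in comps A); case: splits.
  rewrite /M -big_split /=; apply: leq_sum => K _; exact: pot_step inv lt.
have tel := telescope_le (k0_size w es x) step.
rewrite Mk Ms in tel.
have cutb : forall j, (k <= j)%N -> (j < size es)%N ->
    (comp A + #|[set K in comps A | splits K (Lset es j)]| <=
     comp (ltw (~: Cset es j) x))%N.
  move=> j kj lt.
  have -> : ltw (~: Cset es j) x = A :\: cut (Lset es j).
    have hx : ~~ (w (nth e0 es j) < x)%R by rewrite (thr_lt _ inv lt) -leqNgt.
    apply/setP => e; rewrite !inE; case: (boolP (w e < x)%R) => lex; rewrite ?andbF //.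
    rewrite !andbT; congr (~~ _); apply/andb_idr => _.
    apply: lt_le_trans lex _; by rewrite leNgt.
  exact: comp_cut.
have monob : forall j, (comp A <= comp (ltw (~: Cset es j) x))%N.
  by move=> j; apply: comp_mono; apply/subsetP => e; rewrite !inE => /andP[_ ->].
rewrite -(big_mkord xpredT (fun j => comp (ltw (~: Cset es j) x))).
rewrite (big_cat_nat (leq0n k) (k0_size w es x)) /=.
have s1 : (k * comp A <= \sum_(0 <= j < k) comp (ltw (~: Cset es j) x))%N.
  rewrite -{1}(subn0 k) -sum_nat_const_nat; apply: leq_sum => j _; exact: monob.
have s2 : ((size es - k) * comp A + \sum_(k <= i < size es)
              #|[set K in comps A | splits K (Lset es i)]| <=
           \sum_(k <= j < size es) comp (ltw (~: Cset es j) x))%N.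
  rewrite -sum_nat_const_nat -big_split /= big_nat_cond [X in (_ <= X)%N]big_nat_cond.
  apply: leq_sum => j /andP[hj _].
  by case/andP: hj => h1' h2'; apply: cutb.
have ks := k0_size w es x; rewrite -/k in ks tel.
have : (size es * comp A = k * comp A + (size es - k) * comp A)%N.
  by rewrite -mulnDl subnKC.
lia.
Qed.

End Thr.

End P4.
Import P4.

Module P5.


Section Weights.
Variables (V E : finType) (ends : E -> V * V) (R : realDomainType) (w : E -> R).
Hypothesis w_ge0 : forall e, (0 <= w e)%R.
Local Notation conn := (conn ends).
Local Notation comp := (comp ends).
Local Notation ltw := (ltw w).
Local Open Scope ring_scope.

Definition ws := sort <=%R (undup (0 :: [seq w e | e <- enum E])).
Definition mth := (size ws).-1.
Definition thr j := nth 0 ws j.+1.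
Definition dl j := nth 0 ws j.+1 - nth 0 ws j.

Lemma ws_sorted : sorted <%R ws.
Proof. by rewrite /ws sort_lt_sorted undup_uniq. Qed.

Lemma mem_ws y : (y \in ws) = (y \in 0 :: [seq w e | e <- enum E]).
Proof. by rewrite /ws mem_sort mem_undup. Qed.

Lemma nth_lt i j : (i < size ws)%N -> (j < size ws)%N ->
  (nth 0 ws i < nth 0 ws j) = (i < j)%N.
Proof.
move=> hi hj; case: (ltnP i j) => ij.
  by apply: (sorted_ltn_nth lt_trans 0 ws_sorted) => //.
apply/negbTE; rewrite -leNgt; case: (ltnP j i) => ji.
  apply: ltW; exact: (sorted_ltn_nth lt_trans 0 ws_sorted).
by have -> : i = j by apply/eqP; rewrite eqn_leq ij ji.
Qed.

Lemma ws0 : nth 0 ws 0 = 0.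
Proof.
have z : (0 : R) \in ws by rewrite mem_ws in_cons eqxx.
have szp : (0 < size ws)%N by case: (ws) z.
apply/eqP; rewrite eq_le; apply/andP; split.
  rewrite -{2}(nth_index 0 z); case: (posnP (index 0 ws)) => [->//|p0].
  by apply: ltW; rewrite nth_lt ?index_mem.
have : nth 0 ws 0 \in ws by apply: mem_nth.
rewrite mem_ws in_cons => /orP[/eqP->//|/mapP[e _ ->]]; exact: w_ge0.
Qed.

Lemma dl_ge0 j : (j < mth)%N -> 0 <= dl j.
Proof.
move=> lt; rewrite /dl subr_ge0; apply: ltW; rewrite nth_lt //;
  move: lt; rewrite /mth => h; lia.
Qed.

Lemma tele y : y \in ws ->
  \sum_(j < mth) dl j * (~~ (y < thr j))%:R = y.
Proof.
move=> yin; set p := index y ws.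
have pl : (p < size ws)%N by rewrite index_mem.
have pm : (p <= mth)%N by rewrite /mth; move: pl; case: (size ws).
have hy : nth 0 ws p = y by rewrite nth_index.
rewrite (eq_bigr (fun j : 'I_mth => if (j < p)%N then dl j else 0)); last first.
  move=> j _; have jl : (j.+1 < size ws)%N.
    by have := ltn_ord j; rewrite /mth => h; lia.
  rewrite /thr -hy nth_lt // ltnS leqNgt.
  by case: ltnP => _ /=; rewrite ?mulr1 ?mulr0.
rewrite -big_mkcond /= -(big_mkord (fun j => (j < p)%N) dl).
rewrite (big_cat_nat (leq0n p) pm) /=.
rewrite [X in _ + X]big_nat_cond [X in _ + X]big1 ?addr0; last first.
  by move=> j /andP[/andP[h _] h']; move: h'; rewrite ltnNge h.
rewrite big_nat_cond (eq_bigl (fun j => (0 <= j < p)%N && true)); last first.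
  by move=> j /=; case: (j < p)%N; rewrite ?andbF ?andbT.
rewrite -big_nat_cond /dl (telescope_sumr (fun j => nth 0 ws j)) //.
by rewrite ws0 subr0 hy.
Qed.


Lemma w_in_ws e : w e \in ws.
Proof. by rewrite mem_ws in_cons; apply/orP; right; apply: map_f; rewrite mem_enum. Qed.

Lemma card_split (T : {set E}) x :
  #|T| = (#|ltw T x| + #|[set e in T | ~~ (w e < x)%R]|)%N.
Proof.
rewrite -(cardsID [set e | (w e < x)%R] T).
have -> : T :&: [set e | (w e < x)%R] = ltw T x by apply/setP => e; rewrite !inE.
have -> : T :\: [set e | (w e < x)%R] = [set e in T | ~~ (w e < x)%R].
  by apply/setP => e; rewrite !inE andbC.
by [].
Qed.

Lemma weight_T (T : {set E}) :
  \sum_(e in T) w e = \sum_(j < mth) dl j * (#|T|%:R - #|ltw T (thr j)|%:R).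
Proof.
rewrite (eq_bigr (fun e => \sum_(j < mth) dl j * (~~ (w e < thr j))%:R)); last first.
  by move=> e _; rewrite tele // w_in_ws.
rewrite exchange_big /=; apply: eq_bigr => j _.
rewrite -mulr_sumr; congr (_ * _).
rewrite (card_split T (thr j)) natrD addrAC subrr add0r -natr_sum.
congr (_%:R); rewrite -sum1_card big_mkcond /= [RHS]big_mkcond /=.
by apply: eq_bigr => e _; rewrite inE; case: (e \in T); case: (w e < thr j).
Qed.

Definition LB (A : {set E}) := \sum_(j < mth) dl j * ((comp (ltw A (thr j)))%:R - 1).

Lemma tree_bound (A T : {set E}) x (u0 : V) : T \subset A -> (forall u v, conn T u v) ->
  #|T| = #|V|.-1 -> (#|ltw T x| + comp (ltw A x) <= #|T| + 1)%N.
Proof.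
move=> sub hc hT.
have sub1 : ltw T x \subset T by apply/subsetP => e; rewrite inE => /andP[].
have h1 := @comp_del _ _ ends _ _ sub1.
rewrite (conn_comp1 u0 hc) (cardsDS sub1) in h1.
have h2 : (comp (ltw A x) <= comp (ltw T x))%N.
  apply: comp_mono; apply/subsetP => e; rewrite !inE => /andP[/(subsetP sub) -> ->].
  by [].
have h3 := subset_leq_card sub1.
lia.
Qed.

Lemma weight_lb (A T : {set E}) (u0 : V) : T \subset A -> (forall u v, conn T u v) ->
  #|T| = #|V|.-1 -> LB A <= \sum_(e in T) w e.
Proof.
move=> sub hc hT; rewrite weight_T; apply: ler_sum => j _.
apply: ler_wpM2l; first exact: dl_ge0.
have := tree_bound (thr j) u0 sub hc hT.
rewrite -(ler_nat R) natrD [X in _ <= X]natrD => h.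
by rewrite lerBrDr addrAC lerBlDr [X in X <= _]addrC.
Qed.


Lemma kruskal_tree (H : {set E}) (u0 : V) (e0 : E) : comp H = 1 ->
  exists T : {set E}, [/\ T \subset H, (forall u v, conn T u v), #|T| = #|V|.-1 &
             \sum_(e in T) w e = LB H].
Proof.
move=> h1; have [es [inv hc]] := kruskal ends w e0 H.
have [Q1 _ _] := inv.
have hf := Inv_forest (j := size es) inv (leqnn _); rewrite pre_size hc h1 in hf.
have hT : #|[set y in es]| = size es.
  by rewrite cardsE; apply/card_uniqP; exact: Inv_uniq inv.
exists [set y in es]; split.
- by apply/subsetP => y; rewrite inE => /Q1.
- by apply: comp_conn1; rewrite hc.
- by rewrite hT -hf.
rewrite weight_T; apply: eq_bigr => j _; congr (_ * _).
rewrite (thr_set _ inv) (card_pre inv (k0_size _ _ _)) hT.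
have h2 := Inv_forest (j := k0 w es (thr j)) inv (k0_size _ _ _).
rewrite (thr_comp _ inv hc) in h2.
apply/eqP; rewrite subr_eq addrAC eq_sym subr_eq natr1 -!natrD; apply/eqP; congr (_%:R).
lia.
Qed.

End Weights.

End P5.
Import P5.

Module P6.


Section Final.
Variables (V E : finType) (ends : E -> V * V) (R : realFieldType) (w : E -> R) (e0 : E).
Hypothesis w_ge0 : forall e, (0 <= w e)%R.
Local Notation conn := (conn ends).
Local Notation comp := (comp ends).
Local Notation cc := (cc ends).
Local Notation cut := (cut ends).
Local Notation Lset := (Lset ends e0).
Local Notation Inv := (Inv ends w e0).
Local Notation ltw := (ltw w).
Local Notation LB := (LB ends w).
Local Notation Cset := (Cset ends w e0).
Local Open Scope ring_scope.

Lemma LB_diff (A B : {set E}) : LB A - LB B =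
  \sum_(j < mth w) dl w j * ((comp (ltw A (thr w j)))%:R - (comp (ltw B (thr w j)))%:R).
Proof.
rewrite /P5.LB -sumrB; apply: eq_bigr => j _; rewrite -mulrBr; congr (_ * _).
by rewrite opprB addrA subrK.
Qed.

Lemma LB_main H es : Inv H es -> comp [set y in es] = comp H -> comp H = 1 ->
  LB H - LB setT <= \sum_(k < size es) (LB (~: Cset es k) - LB setT).
Proof.
move=> inv hc h1.
rewrite LB_diff (eq_bigr _ (fun k _ => LB_diff _ _)) exchange_big /=.
apply: ler_sum => j _; rewrite -mulr_sumr; apply: ler_wpM2l; first exact: dl_ge0.
have := thr_main (thr w j) inv hc h1; rewrite -(ler_nat R) !natrD natrM natr_sum => h.
rewrite sumrB sumr_const card_ord.
move: h; set a := (comp (ltw H (thr w j)))%:R; set b := (comp (ltw setT (thr w j)))%:R.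
set s := \sum_(i < size es) _ => h.
rewrite -mulr_natl; lra.
Qed.

Lemma Cset_sub H es j : Inv H es -> (j < size es)%N -> Cset es j \subset ~: H.
Proof.
move=> [_ _ Q3] lt; apply/subsetP => e; rewrite !inE => /andP[ct lte].
apply/negP => eH; have := Q3 _ lt _ eH lte => hab.
move: ct; case: (Lset_cases ends e0 es j) => ->; rewrite !inE;
  by rewrite (conn_eqr _ hab) eqxx.
Qed.

Lemma cut_ind (S : {set V}) e :
  ((e \in cut S) <= ((ends e).1 \in S) + ((ends e).2 \in S))%N.
Proof. by rewrite inE; case: ((ends e).1 \in S); case: ((ends e).2 \in S). Qed.


Definition Nv (es : seq E) v := (\sum_(k < size es) (v \in Lset es k))%N.

Lemma cost_comb (c : E -> R) H es : Inv H es -> (forall e, 0 <= c e) ->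
  \sum_(k < size es) \sum_(e in Cset es k) c e <=
  \sum_(e in ~: H) c e * (Nv es (ends e).1 + Nv es (ends e).2)%:R.
Proof.
move=> inv c0.
have step : forall k : 'I_(size es), \sum_(e in Cset es k) c e <=
    \sum_(e in ~: H) c e * (((ends e).1 \in Lset es k) + ((ends e).2 \in Lset es k))%N%:R.
  move=> k; have sub := Cset_sub inv (ltn_ord k).
  rewrite big_mkcond [X in _ <= X]big_mkcond /=; apply: ler_sum => e _.
  case: (boolP (e \in Cset es k)) => eC; last first.
    by case: ifP => // _; apply: mulr_ge0 => //; apply: ler0n.
  rewrite (subsetP sub _ eC); rewrite -[X in X <= _]mulr1; apply: ler_wpM2l => //.
  have := cut_ind (Lset es k) e; move: eC; rewrite inE => /andP[-> _].
  by rewrite -(ler_nat R).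
apply: le_trans (ler_sum _ (fun k _ => step k)) _.
rewrite exchange_big /=; apply: ler_sum => e _; rewrite -mulr_sumr; apply: ler_wpM2l => //.
by rewrite -natr_sum /Nv -big_split.
Qed.

End Final.

End P6.
Import P6.

From mathcomp Require Import all_classical all_reals all_analysis.
Import Order.TTheory GRing.Theory Num.Theory.
Import P1 P2 P3 P4 P5 P6.
Local Open Scope ring_scope.

Section MSTs.
Variables (R : realType) (V E : finType) (ends : E -> V * V) (w : E -> R).
Hypothesis w_ge0 : forall e, 0 <= w e.

Lemma MST_lb (A : {set E}) (u0 : V) : ((P5.LB ends w A)%:E <= MST ends w A)%E.
Proof.
apply: Order.POrderTheory.le_bigmin; first exact: leey.
move=> T /and3P[sub /forallP hc /eqP hT]; rewrite lee_fin.
apply: (weight_lb w_ge0 u0 sub) => // u v; exact: (forallP (hc u) v).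
Qed.

Lemma MST_eq (A : {set E}) (u0 : V) (e0 : E) : P1.comp ends A = 1 ->
  MST ends w A = (P5.LB ends w A)%:E.
Proof.
move=> h1; apply/le_anti; rewrite MST_lb // andbT.
have [T [sub hc hT hw]] := kruskal_tree w_ge0 u0 e0 h1.
rewrite -hw; apply: Order.TotalTheory.bigmin_le_cond.
by rewrite /spanning_tree sub hT eqxx andbT; apply/forallP => u; apply/forallP => v; apply: hc.
Qed.

End MSTs.

Lemma Nv_log (R : realType) (V E : finType) (ends : E -> V * V) (w : E -> R) (e0 : E)
   H es v : Inv ends w e0 H es ->
  ((Nv ends e0 es v)%:R <= log2 (#|V|%:R : R)).
Proof.
move=> inv.
have h1 := double v inv (leqnn (size es)).
have h2 : (2 ^ Nv ends e0 es v <= #|V|)%N.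
  by apply: leq_trans h1 _; apply: max_card.
have ln2 : (0 : R) < ln 2 by apply: ln_gt0; rewrite ltr1n.
rewrite /log2 ler_pdivlMr // mulr_natl -lnXn ?ltr0n //.
rewrite ler_ln ?posrE ?exprn_gt0 ?ltr0n //; last by apply: leq_trans h2; rewrite expn_gt0.
by rewrite -natrX ler_nat.
Qed.

Theorem mainTheorem6 (R : realType) (V E : finType) (ends : E -> V * V)
    (w c : E -> R)
    (loopless : forall e, (ends e).1 != (ends e).2)
    (w_ge0 : forall e, 0 <= w e) (c_gt0 : forall e, 0 < c e)
    (Gconn : connectedE ends [set: E]) (n_ge2 : (2 <= #|V|)%N)
    (F : {set E}) (GFconn : connectedE ends (~: F)) :
  exists t : nat, (t <= #|V|)%N /\
  exists (S : 'I_t.-1 -> {set V}) (W : 'I_t.-1 -> R),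
    (forall i, S i != finset.set0 /\ S i != [set: V]) /\
    \sum_(i < t.-1) cost c (pcut ends w (S i) (W i))
      <= 2 * cost c F * log2 (#|V|%:R) /\
    (\sum_(i < t.-1) profit ends w (pcut ends w (S i) (W i))
      >= profit ends w F)%E.
Proof.
have n0 : (0 < #|V|)%N by apply: leq_trans n_ge2.
have /card_gt0P[u0 _] := n0.
have [e0 _|none] := pickP (fun _ : E => true); last first.
  have /card_gt1P[u [v [_ _ uv]]] := n_ge2.
  have hE : [set: E] = finset.set0 by apply/setP => e; have := none e.
  have := Gconn u v; rewrite hE => /conn_set0 huv; by rewrite huv eqxx in uv.
set H := ~: F.
have hH : P1.comp ends H = 1 by apply: (conn_comp1 u0); exact: GFconn.
have hT : P1.comp ends [set: E] = 1 by apply: (conn_comp1 u0); exact: Gconn.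
have [es [inv hc]] := kruskal ends w e0 H.
have hf := Inv_forest (j := size es) inv (leqnn _).
rewrite pre_size hc hH in hf.
exists (size es).+1; split; first by rewrite -hf add1n.
exists (fun i : 'I_(size es) => Lset ends e0 es i), (fun i => w (nth e0 es i)).
split; first by move=> i; exact: Lset_prop inv (ltn_ord i).
split.
  change (\sum_(i < size es) \sum_(e in Cset ends w e0 es i) c e <=
          2 * cost c F * log2 (#|V|%:R : R)).
  apply: le_trans (cost_comb inv (fun e => ltW (c_gt0 e))) _.
  rewrite /H finset.setCK.
  have -> : 2 * cost c F * log2 (#|V|%:R : R) =
            \sum_(e in F) c e * (2 * log2 (#|V|%:R : R)).
    by rewrite /cost -mulr_suml; ring.
  apply: ler_sum => e _; apply: ler_wpM2l; first exact: ltW.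
  have := @Nv_log R V E ends w e0 H es (ends e).1 inv.
  have := @Nv_log R V E ends w e0 H es (ends e).2 inv.
  rewrite natrD; lra.
have MT := MST_eq w_ge0 u0 e0 hT.
have bound : forall i : 'I_(size es),
    ((P5.LB ends w (~: Cset ends w e0 es i) - P5.LB ends w [set: E])%:E <=
     profit ends w (pcut ends w (Lset ends e0 es i) (w (nth e0 es i))))%E.
  move=> i; rewrite /profit MT EFinB; apply: leeB; last exact: le_refl.
  exact: MST_lb.
apply: le_trans (lee_sum _ (fun i _ => bound i)).
rewrite sumEFin /profit MT (MST_eq w_ge0 u0 e0 hH) -EFinB lee_fin.
exact: LB_main inv hc hH.
Qed.
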